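(* Let $\mathcal{M}_i=(E_i,\rho_i)$, $i=1,2$, be $q$-matroids and $E=E_1\oplus E_2$. Choose non-degenerate symmetric bilinear forms $\langle\cdot,\cdot\rangle_i$ on $E_i$ and define $\langle v_1+v_2,w_1+w_2\rangle=\langle v_1,w_1\rangle_1+\langle v_2,w_2\rangle_2$ for $v_i,w_i\in E_i$. Then $\langle\cdot,\cdot\rangle$ is a non-degenerate symmetric bilinear form on $E$ and \[ (\mathcal{M}_1\oplus\mathcal{M}_2)^*=\mathcal{M}_1^*\oplus\mathcal{M}_2^*, \] where $\mathcal{M}_i^*$ is the dual with respect to $\langle\cdot,\cdot\rangle_i$ and $(\mathcal{M}_1\oplus\mathcal{M}_2)^*$ the dual with respect to $\langle\cdot,\cdot\rangle$.
   Context: Let $\mathbb{F}=\mathbb{F}_q$. A $q$-matroid is $\mathcal{M}=(E,\rho)$, $E$ a finite-dimensional $\mathbb{F}$-vector space, $\rho$ from subspaces to $\mathbb{Z}_{\ge0}$ with $0\le\rho(V)\le\dim V$, monotone and submodular. Given a non-degenerate symmetric bilinear form on $E$ with orthogonal spaces $V^\perp$, the dual of $\mathcal{M}$ is $\mathcal{M}^*=(E,\rho^* )$ with $\rho^*(V)=\dim V+\rho(V^\perp)-\rho(E)$. Direct sum: for $E=E_1\oplus E_2$ with projections $\pi_i:E\to E_i$, $\mathcal{M}_1\oplus\mathcal{M}_2=(E,\rho)$ where $\rho(V)=\dim V+\min_{X\le V}(\rho_1(\pi_1(X))+\rho_2(\pi_2(X))-\dim X)$. *)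

(* Defs.v *)
From HB Require Import structures.
From mathcomp Require Import all_boot all_order all_algebra.
Set Implicit Arguments. Unset Strict Implicit. Unset Printing Implicit Defensive.
Import Order.TTheory GRing.Theory Num.Theory.
Local Open Scope ring_scope.

(* Ambient spaces: E = 'rV[F]_n with F a finite field (F = F_q).
   Subspaces are {vspace 'rV[F]_n}; over a finite field these form a finite type. *)

Import VectorInternalTheory.
HB.instance Definition _ (F : finFieldType) (n : nat) :=
  [Finite of {vspace 'rV[F]_n} by <:].


Section QMat.
Variable F : finFieldType.

Definition qmatroid (n : nat) (rho : {vspace 'rV[F]_n} -> int) : Prop :=
  [/\ (forall V, 0 <= rho V /\ rho V <= (\dim V)%:Z),
      (forall V W, (V <= W)%VS -> rho V <= rho W) &
      (forall V W, rho (V + W)%VS + rho (V :&: W)%VS <= rho V + rho W)].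

Definition nondeg_sym_bilinear (n : nat) (b : 'rV[F]_n -> 'rV[F]_n -> F) : Prop :=
  [/\ (forall a u v w, b (a *: u + v) w = a * b u w + b v w),
      (forall a u v w, b u (a *: v + w) = a * b u v + b u w),
      (forall u v, b u v = b v u) &
      (forall u, (forall v, b u v = 0) -> u = 0)].

Definition orth (n : nat) (b : 'rV[F]_n -> 'rV[F]_n -> F) (V : {vspace 'rV[F]_n})
  : {vspace 'rV[F]_n} :=
  <<[seq w <- enum [set: 'rV[F]_n] | [forall v, (v \in V) ==> (b v w == 0%R)]]>>%VS.

Definition qdual (n : nat) (b : 'rV[F]_n -> 'rV[F]_n -> F)
  (rho : {vspace 'rV[F]_n} -> int) (V : {vspace 'rV[F]_n}) : int :=
  (\dim V)%:Z + rho (orth b V) - rho fullv.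

(* E = E1 (+) E2 realized as 'rV_(n1 + n2) = row_mx E1 E2, with projections
   lsubmx / rsubmx. *)
Definition proj1 (n1 n2 : nat) : 'Hom('rV[F]_(n1 + n2), 'rV[F]_n1) :=
  linfun (@lsubmx F 1 n1 n2).
Definition proj2 (n1 n2 : nat) : 'Hom('rV[F]_(n1 + n2), 'rV[F]_n2) :=
  linfun (@rsubmx F 1 n1 n2).

Definition dsum_term (n1 n2 : nat) (rho1 : {vspace 'rV[F]_n1} -> int)
  (rho2 : {vspace 'rV[F]_n2} -> int) (X : {vspace 'rV[F]_(n1 + n2)}) : int :=
  rho1 (proj1 n1 n2 @: X)%VS + rho2 (proj2 n1 n2 @: X)%VS - (\dim X)%:Z.

Definition qdsum (n1 n2 : nat) (rho1 : {vspace 'rV[F]_n1} -> int)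
  (rho2 : {vspace 'rV[F]_n2} -> int) (V : {vspace 'rV[F]_(n1 + n2)}) : int :=
  (\dim V)%:Z +
  \big[Num.min/dsum_term rho1 rho2 0%VS]_(X : {vspace 'rV[F]_(n1 + n2)} | (X <= V)%VS)
     dsum_term rho1 rho2 X.

Definition sum_form (n1 n2 : nat) (b1 : 'rV[F]_n1 -> 'rV[F]_n1 -> F)
  (b2 : 'rV[F]_n2 -> 'rV[F]_n2 -> F) (v w : 'rV[F]_(n1 + n2)) : F :=
  b1 (lsubmx v) (lsubmx w) + b2 (rsubmx v) (rsubmx w).

End QMat.

(* Main.v *)
Require Import Defs.
From HB Require Import structures.
From mathcomp Require Import all_boot all_order all_algebra.
From mathcomp Require Import zify.
Import Order.TTheory GRing.Theory Num.Theory.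
Local Open Scope ring_scope.
Set Implicit Arguments. Unset Strict Implicit. Unset Printing Implicit Defensive.

Section Bil.
Variables (F : finFieldType) (n : nat) (b : 'rV[F]_n -> 'rV[F]_n -> F).
Hypothesis hb : nondeg_sym_bilinear b.

Lemma bDl u v w : b (u + v) w = b u w + b v w.
Proof. by case: hb => h _ _ _; have := h 1 u v w; rewrite scale1r mul1r. Qed.
Lemma bZl a u w : b (a *: u) w = a * b u w.
Proof.
case: hb => h _ _ _; have := h 1 0 0 w; rewrite scaler0 !addr0 mul1r.
rewrite -{1}[b 0 w]addr0 => /addrI h0.
by have := h a u 0 w; rewrite !addr0 -h0 addr0.
Qed.
Lemma b0l w : b 0 w = 0.
Proof. by rewrite -(scale0r 0) bZl mul0r. Qed.
Lemma bsym u v : b u v = b v u.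
Proof. by case: hb. Qed.
Lemma bDr u v w : b w (u + v) = b w u + b w v.
Proof. by rewrite !(bsym w) bDl. Qed.
Lemma bZr a u w : b w (a *: u) = a * b w u.
Proof. by rewrite !(bsym w) bZl. Qed.
Lemma b0r w : b w 0 = 0.
Proof. by rewrite bsym b0l. Qed.
Lemma b_sumr (I : finType) (c : I -> F) (x : I -> 'rV_n) w :
  b w (\sum_i c i *: x i) = \sum_i c i * b w (x i).
Proof.
elim/big_rec2: _ => [|i y1 y2 _ <-]; first exact: b0r.
by rewrite bDr bZr.
Qed.
Lemma b_suml (I : finType) (c : I -> F) (x : I -> 'rV_n) w :
  b (\sum_i c i *: x i) w = \sum_i c i * b (x i) w.
Proof. by rewrite bsym b_sumr; apply: eq_bigr => i _; rewrite bsym. Qed.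

Lemma memv_orth (V : {vspace 'rV[F]_n}) w :
  reflect (forall v, v \in V -> b v w = 0) (w \in orth b V).
Proof.
apply: (iffP idP) => [wo v vV | H].
  move: wo; rewrite /orth.
  set X := [seq _ <- _ | _] => /(@coord_span _ _ _ (in_tuple X)) ->.
  rewrite b_sumr big1 // => i _.
  have : (in_tuple X)`_i \in X by exact: (mem_nth 0 (ltn_ord i)).
  rewrite mem_filter => /andP[/forallP /(_ v) /implyP /(_ vV) /eqP -> _].
  by rewrite mulr0.
apply: memv_span; rewrite mem_filter mem_enum inE andbT.
by apply/forallP => v; apply/implyP => vV; rewrite H.
Qed.

Lemma dim_orth (V : {vspace 'rV[F]_n}) : \dim (orth b V) = (n - \dim V)%N.
Proof.
set k := \dim V; set X := vbasis V.
pose A : 'M[F]_(n, k) := \matrix_(j, i) b X`_i (delta_mx 0 j).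
have mulA w i : (w *m A) 0 i = b X`_i w.
  rewrite mxE [in RHS](row_sum_delta w) b_sumr; apply: eq_bigr => j _.
  by rewrite mxE.
pose g : 'Hom('rV[F]_n, 'rV[F]_k) := linfun (mulmxr A).
have XV (i : 'I_k) : X`_i \in V by apply: vbasis_mem; apply: mem_nth; rewrite size_tuple.
have -> : orth b V = lker g.
  apply/vspaceP => w; rewrite memv_ker lfunE /=; apply/memv_orth/eqP.
    move=> H; apply/rowP => i; rewrite mulA mxE; exact: H.
  move=> wA v vV; rewrite (coord_vbasis vV) b_suml big1 // => i _.
  by rewrite -mulA wA mxE mulr0.
have rfA : row_full A.
  rewrite /row_full -mxrank_tr; apply: inj_row_free => c cA.
  have H w : b (\sum_i c 0 i *: X`_i) w = 0.
    rewrite [w](row_sum_delta w) b_sumr big1 // => j _.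
    suff -> : b (\sum_i c 0 i *: X`_i) (delta_mx 0 j) = 0 by rewrite mulr0.
    have := congr1 (fun M : 'M_(1, n) => M 0 j) cA.
    rewrite !mxE => <-; rewrite b_suml; apply: eq_bigr => i _.
    by rewrite !mxE.
  case: hb => _ _ _ /(_ _ H) /(freeP _ _).
  move/(_ (basis_free (vbasisP V))) => c0.
  by apply/rowP => i; rewrite mxE c0.
have img : limg g = fullv.
  apply/eqP; rewrite eqEsubv subvf /=; apply/subvP => c _.
  apply/memv_imgP; exists (c *m pinvmx A); first exact: memvf.
  by rewrite lfunE /= mulmxKpV // submx_full.
have := limg_ker_dim g fullv; rewrite capfv img !dimvf /dim /= !mul1n.
move=> H; have kn : (k <= n)%N by rewrite -H leq_addl.
by apply/eqP; rewrite -(eqn_add2r k) subnK // H.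
Qed.
End Bil.

Lemma dim_img_le (F : fieldType) (aT rT : vectType F) (f : 'Hom(aT, rT)) U :
  (\dim (f @: U) <= \dim U)%N.
Proof. by rewrite -(limg_ker_dim f U) leq_addl. Qed.

Section DS.
Variables (F : finFieldType) (n1 n2 : nat).
Local Notation p1 := (proj1 F n1 n2).
Local Notation p2 := (proj2 F n1 n2).

Definition inj1 : 'Hom('rV[F]_n1, 'rV[F]_(n1 + n2)) :=
  linfun (mulmxr (row_mx 1%:M 0)).
Definition inj2 : 'Hom('rV[F]_n2, 'rV[F]_(n1 + n2)) :=
  linfun (mulmxr (row_mx 0 1%:M)).
Lemma inj1E x : inj1 x = row_mx x 0.
Proof. by rewrite lfunE /= mul_mx_row mulmx1 mulmx0. Qed.
Lemma inj2E x : inj2 x = row_mx 0 x.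
Proof. by rewrite lfunE /= mul_mx_row mulmx1 mulmx0. Qed.
Lemma p1E v : p1 v = lsubmx v.
Proof. by rewrite lfunE. Qed.
Lemma p2E v : p2 v = rsubmx v.
Proof. by rewrite lfunE. Qed.
Lemma decomp (v : 'rV[F]_(n1 + n2)) : v = inj1 (lsubmx v) + inj2 (rsubmx v).
Proof. by rewrite inj1E inj2E add_row_mx addr0 add0r hsubmxK. Qed.

Definition PS (A : {vspace 'rV[F]_n1}) (B : {vspace 'rV[F]_n2}) :=
  (inj1 @: A + inj2 @: B)%VS.

Lemma memPS A B z : (z \in PS A B) = (lsubmx z \in A) && (rsubmx z \in B).
Proof.
apply/idP/andP => [/memv_addP[x /memv_imgP[a aA ->] [y /memv_imgP[c cB ->] ->]]|[zA zB]].
  by rewrite inj1E inj2E add_row_mx addr0 add0r row_mxKl row_mxKr.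
by rewrite [z]decomp; apply: memv_add; apply: memv_img.
Qed.

Lemma dimPS A B : \dim (PS A B) = (\dim A + \dim B)%N.
Proof.
apply/eqP; rewrite eqn_leq; apply/andP; split.
  apply: leq_trans (dimv_add_leqif _ _) _.
  by apply: leq_add; apply: dim_img_le.
rewrite -(limg_ker_dim (p1) (PS A B)) addnC; apply: leq_add.
  apply: leq_trans (dim_img_le p2 _).
  apply: dimvS; apply/subvP => c cB; apply/memv_imgP; exists (inj2 c).
    rewrite memv_cap memv_ker p1E inj2E row_mxKl eqxx andbT.
    by rewrite memPS row_mxKl row_mxKr cB mem0v.
  by rewrite p2E inj2E row_mxKr.
apply: dimvS; apply/subvP => a aA; apply/memv_imgP; exists (inj1 a).
  by rewrite memPS inj1E row_mxKl row_mxKr aA mem0v.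
by rewrite p1E inj1E row_mxKl.
Qed.

Lemma sub_PS (Z : {vspace 'rV[F]_(n1 + n2)}) :
  (Z <= PS (p1 @: Z) (p2 @: Z))%VS.
Proof.
apply/subvP => z zZ; rewrite memPS -p1E -p2E.
by rewrite !memv_img.
Qed.

Lemma limg_PS1 A B : (p1 @: PS A B <= A)%VS.
Proof.
apply/subvP => y /memv_imgP[z]; rewrite memPS p1E => /andP[zA _] ->; exact: zA.
Qed.
Lemma limg_PS2 A B : (p2 @: PS A B <= B)%VS.
Proof.
apply/subvP => y /memv_imgP[z]; rewrite memPS p2E => /andP[_ zB] ->; exact: zB.
Qed.

Lemma limg_p1f : (p1 @: fullv = fullv)%VS.
Proof.
apply/eqP; rewrite eqEsubv subvf /=; apply/subvP => x _; apply/memv_imgP.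
by exists (inj1 x); rewrite ?memvf // p1E inj1E row_mxKl.
Qed.
Lemma limg_p2f : (p2 @: fullv = fullv)%VS.
Proof.
apply/eqP; rewrite eqEsubv subvf /=; apply/subvP => x _; apply/memv_imgP.
by exists (inj2 x); rewrite ?memvf // p2E inj2E row_mxKr.
Qed.

Lemma dim_le_proj (X : {vspace 'rV[F]_(n1 + n2)}) :
  (\dim X <= \dim (p1 @: X) + \dim (p2 @: X))%N.
Proof. by rewrite -dimPS; apply: dimvS; apply: sub_PS. Qed.

Lemma sum_form_nondeg b1 b2 :
  nondeg_sym_bilinear b1 -> nondeg_sym_bilinear b2 ->
  nondeg_sym_bilinear (@sum_form F n1 n2 b1 b2).
Proof.
move=> h1 h2; split; rewrite /sum_form.
- move=> a u v w; rewrite !linearD !linearZ /= bDl // bZl // bDl // bZl //.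
  by rewrite mulrDr !addrA; congr (_ + _); rewrite -!addrA; congr (_ + _); rewrite addrC.
- move=> a u v w; rewrite !linearD !linearZ /= bDr // bZr // bDr // bZr //.
  by rewrite mulrDr !addrA; congr (_ + _); rewrite -!addrA; congr (_ + _); rewrite addrC.
- by move=> u v; rewrite (bsym h1) (bsym h2).
move=> u H.
have l0 : lsubmx u = 0.
  case: h1 => _ _ _; apply => w; have := H (inj1 w).
  by rewrite inj1E row_mxKl row_mxKr b0r // addr0.
have r0 : rsubmx u = 0.
  case: h2 => _ _ _; apply => w; have := H (inj2 w).
  by rewrite inj2E row_mxKl row_mxKr b0r // add0r.
by rewrite -[u]hsubmxK l0 r0 row_mx0.
Qed.

End DS.

Lemma dimf (F : finFieldType) n : \dim (fullv : {vspace 'rV[F]_n}) = n.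
Proof. by rewrite dimvf /dim /= mul1n. Qed.

Lemma dim_le_n (F : finFieldType) n (U : {vspace 'rV[F]_n}) : (\dim U <= n)%N.
Proof. by have := dimvS (subvf U); rewrite dimf. Qed.

Section QM.
Variables (F : finFieldType) (n : nat) (rho : {vspace 'rV[F]_n} -> int).
Hypothesis hr : qmatroid rho.

Lemma rho_mono U V : (U <= V)%VS -> rho U <= rho V.
Proof. by case: hr => _ h _; apply: h. Qed.

Lemma rho_unit B A : (B <= A)%VS ->
  rho A <= rho B + (\dim A)%:Z - (\dim B)%:Z.
Proof.
move=> BA; case: hr => hb _ hs.
set C := (A :\: B)%VS.
have BC : (B + C = A)%VS.
  by rewrite addvC /C -[in RHS](addv_diff_cap A B) (capv_idPr BA).
have BC0 : (B :&: C = 0)%VS by rewrite capvC capv_diff.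
have := hs B C; rewrite BC BC0.
have dC := dimv_disjoint_sum BC0; rewrite BC in dC.
have [h0 _] := hb 0%VS; have [_ hC] := hb C.
lia.
Qed.
End QM.

Section OrthL.
Variables (F : finFieldType) (n : nat) (b : 'rV[F]_n -> 'rV[F]_n -> F).
Hypothesis hb : nondeg_sym_bilinear b.

Lemma orth_anti U V : (U <= V)%VS -> (orth b V <= orth b U)%VS.
Proof.
move=> UV; apply/subvP => w /(memv_orth hb) H; apply/(memv_orth hb) => u uU.
by apply: H; apply: (subvP UV).
Qed.

Lemma orth_sym Z V : (Z <= orth b V)%VS -> (V <= orth b Z)%VS.
Proof.
move=> ZV; apply/subvP => v vV; apply/(memv_orth hb) => z zZ.
by rewrite (bsym hb); move/(memv_orth hb): (subvP ZV z zZ); apply.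
Qed.
End OrthL.

Section Main.
Variables (F : finFieldType) (n1 n2 : nat)
  (rho1 : {vspace 'rV[F]_n1} -> int) (rho2 : {vspace 'rV[F]_n2} -> int)
  (b1 : 'rV[F]_n1 -> 'rV[F]_n1 -> F) (b2 : 'rV[F]_n2 -> 'rV[F]_n2 -> F).
Hypotheses (h1 : qmatroid rho1) (h2 : qmatroid rho2)
  (hb1 : nondeg_sym_bilinear b1) (hb2 : nondeg_sym_bilinear b2).
Local Notation p1 := (proj1 F n1 n2).
Local Notation p2 := (proj2 F n1 n2).
Local Notation b := (sum_form b1 b2).
Local Notation T := (dsum_term rho1 rho2).
Local Notation D := (dsum_term (qdual b1 rho1) (qdual b2 rho2)).
Let hb : nondeg_sym_bilinear b := sum_form_nondeg hb1 hb2.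

Lemma partE (X : {vspace 'rV[F]_(n1 + n2)}) :
  rho1 fullv + rho2 fullv - (n1 + n2)%N%:Z <= T X.
Proof.
rewrite /dsum_term.
have u1 := rho_unit h1 (subvf (p1 @: X)); have u2 := rho_unit h2 (subvf (p2 @: X)).
rewrite !dimf in u1 u2.
have := dim_le_proj X.
move=> hh. set r1 := rho1 fullv in u1 *. set r2 := rho2 fullv in u2 *. set a1 := rho1 (p1 @: X) in u1 *. set a2 := rho2 (p2 @: X) in u2 *. set d1 := \dim (p1 @: X) in u1 hh *. set d2 := \dim (p2 @: X) in u2 hh *. set d := \dim X in hh *. lia.
Qed.

Lemma partEf : T fullv = rho1 fullv + rho2 fullv - (n1 + n2)%N%:Z.
Proof. by rewrite /dsum_term limg_p1f limg_p2f dimf. Qed.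

Lemma stepb (V X : {vspace 'rV[F]_(n1 + n2)}) : (X <= V)%VS ->
  exists Z, (Z <= orth b V)%VS /\
  (\dim (orth b V))%:Z + T Z <= D X + (rho1 fullv + rho2 fullv).
Proof.
move=> XV.
set W := orth b V.
set A := orth b1 (p1 @: X); set B := orth b2 (p2 @: X); set Q := PS A B.
exists (W :&: Q)%VS; split; first exact: capvSl.
have hZ1 : (p1 @: (W :&: Q) <= A)%VS.
  exact: subv_trans (limgS p1 (capvSr W Q)) (limg_PS1 A B).
have hZ2 : (p2 @: (W :&: Q) <= B)%VS.
  exact: subv_trans (limgS p2 (capvSr W Q)) (limg_PS2 A B).
have r1 := rho_mono h1 hZ1; have r2 := rho_mono h2 hZ2.
have QX : (Q <= orth b X)%VS.
  apply/subvP => q; rewrite memPS => /andP[qA qB].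
  apply/(memv_orth hb) => x xX; rewrite /sum_form.
  move/(memv_orth hb1): qA => -> ; last by rewrite -p1E memv_img.
  move/(memv_orth hb2): qB => -> ; last by rewrite -p2E memv_img.
  by rewrite addr0.
have WX : (W <= orth b X)%VS by apply: orth_anti.
have dWQ : (\dim (W + Q) <= \dim (orth b X))%N by apply: dimvS; rewrite subv_add WX QX.
have dsc := dimv_sum_cap W Q.
have dQ := dimPS A B.
have dA := dim_orth hb1 (p1 @: X).
have dB := dim_orth hb2 (p2 @: X).
have dX := dim_orth hb X.
have l1 := dim_le_n (p1 @: X); have l2 := dim_le_n (p2 @: X).
have l3 := dim_le_n X.
rewrite /dsum_term /qdual -/A -/B.
move: r1 r2 dWQ dsc dQ dA dB dX l1 l2 l3.
set x1 := \dim W; set x2 := \dim Q; set x3 := \dim (W :&: Q).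
set x4 := \dim (W + Q); set x5 := \dim (orth b X).
set x6 := \dim A; set x7 := \dim B.
set x8 := \dim (p1 @: X); set x9 := \dim (p2 @: X); set x10 := \dim X.
set y1 := rho1 (p1 @: (W :&: Q)); set y2 := rho2 (p2 @: (W :&: Q)).
set y3 := rho1 A; set y4 := rho2 B.
set y5 := rho1 fullv; set y6 := rho2 fullv.
intros; lia.
Qed.

Lemma stepa (V Z : {vspace 'rV[F]_(n1 + n2)}) : (Z <= orth b V)%VS ->
  exists X, (X <= V)%VS /\
  D X + (rho1 fullv + rho2 fullv) <= (\dim (orth b V))%:Z + T Z.
Proof.
move=> ZW.
set P := PS (p1 @: Z) (p2 @: Z).
set X := (V :&: orth b P)%VS.
exists X; split; first exact: capvSl.
set A := orth b1 (p1 @: X); set B := orth b2 (p2 @: X).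
have hZA : (p1 @: Z <= A)%VS.
  apply/subvP => y /memv_imgP[z zZ ->]; apply/(memv_orth hb1) => x' /memv_imgP[x xX ->].
  have xP : x \in orth b P by move: xX; rewrite memv_cap => /andP[].
  have iP : inj1 F n1 n2 (p1 z) \in P.
    by rewrite memPS inj1E row_mxKl row_mxKr memv_img // mem0v.
  move/(memv_orth hb): xP => /(_ _ iP); rewrite /sum_form inj1E row_mxKl row_mxKr.
  by rewrite (b0l hb2) addr0 (bsym hb1) !p1E.
have hZB : (p2 @: Z <= B)%VS.
  apply/subvP => y /memv_imgP[z zZ ->]; apply/(memv_orth hb2) => x' /memv_imgP[x xX ->].
  have xP : x \in orth b P by move: xX; rewrite memv_cap => /andP[].
  have iP : inj2 F n1 n2 (p2 z) \in P.
    by rewrite memPS inj2E row_mxKl row_mxKr memv_img // mem0v.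
  move/(memv_orth hb): xP => /(_ _ iP); rewrite /sum_form inj2E row_mxKl row_mxKr.
  by rewrite (b0l hb1) add0r (bsym hb2) !p2E.
have r1 := rho_unit h1 hZA; have r2 := rho_unit h2 hZB.
have dA := dim_orth hb1 (p1 @: X).
have dB := dim_orth hb2 (p2 @: X).
have dP := dimPS (p1 @: Z) (p2 @: Z).
have ZP : (Z <= P)%VS by apply: sub_PS.
have VZ := orth_sym hb ZW.
have PZ := orth_anti hb ZP.
have dVP : (\dim (V + orth b P) <= \dim (orth b Z))%N by apply: dimvS; rewrite subv_add VZ PZ.
have dsc := dimv_sum_cap V (orth b P).
have dOP := dim_orth hb P.
have dOZ := dim_orth hb Z.
have dW := dim_orth hb V.
have l1 := dim_le_n (p1 @: X); have l2 := dim_le_n (p2 @: X).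
have l3 := dim_le_n P; have l4 := dim_le_n Z; have l5 := dim_le_n V.
rewrite /dsum_term /qdual -/A -/B.
move: r1 r2 dA dB dP dVP dsc dOP dOZ dW l1 l2 l3 l4 l5.
set x1 := \dim A; set x2 := \dim B; set x3 := \dim (V + orth b P).
set x4 := \dim (orth b P); set x5 := \dim (orth b Z); set x6 := \dim (orth b V).
set x7 := \dim (p1 @: X); set x8 := \dim (p2 @: X); set x9 := \dim (p1 @: Z).
set x10 := \dim (p2 @: Z); set x11 := \dim P; set x12 := \dim X.
set x13 := \dim V; set x14 := \dim Z.
set y1 := rho1 (p1 @: Z); set y2 := rho2 (p2 @: Z).
set y3 := rho1 A; set y4 := rho2 B.
set y5 := rho1 fullv; set y6 := rho2 fullv.
intros; lia.
Qed.

End Main.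
Unset Implicit Arguments.

Lemma le_bigmin_c (I : finType) (P : pred I) (f : I -> int) i0 x :
  P i0 -> (forall i, P i -> x <= f i) -> x <= \big[Num.min/f i0]_(i | P i) f i.
Proof. by move=> Pi0 H; apply: le_bigmin => //; apply: H. Qed.

Theorem theorem5p10 (F : finFieldType) (n1 n2 : nat)
  (rho1 : {vspace 'rV[F]_n1} -> int) (rho2 : {vspace 'rV[F]_n2} -> int)
  (b1 : 'rV[F]_n1 -> 'rV[F]_n1 -> F) (b2 : 'rV[F]_n2 -> 'rV[F]_n2 -> F) :
  qmatroid rho1 -> qmatroid rho2 ->
  nondeg_sym_bilinear b1 -> nondeg_sym_bilinear b2 ->
  nondeg_sym_bilinear (sum_form b1 b2) /\
  qdual (sum_form b1 b2) (qdsum rho1 rho2) =1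
    qdsum (qdual b1 rho1) (qdual b2 rho2).
Proof.
move=> h1 h2 hb1 hb2; have hb := sum_form_nondeg hb1 hb2.
split => // V.
rewrite /qdual /qdsum.
set W := orth (sum_form b1 b2) V.
set T := dsum_term rho1 rho2.
set D := dsum_term _ _.
set m1 := \big[_/_]_(X | (X <= V)%VS) D X.
set m2 := \big[_/_]_(X | (X <= W)%VS) T X.
set mE := \big[_/_]_(X | (X <= fullv)%VS) T X.
set c := rho1 fullv + rho2 fullv.
have hE : mE = c - (n1 + n2)%N%:Z.
  apply/eqP; rewrite eq_le; apply/andP; split.
    by rewrite -partEf; apply: bigmin_le_cond; apply: subvf.
    apply: (@le_bigmin_c _ _ T 0%VS); first exact: sub0v.
    by move=> X _; apply: partE.
have hm : m1 = (\dim W)%:Z + m2 - c.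
  apply/eqP; rewrite eq_le; apply/andP; split.
    suff : m1 + c - (\dim W)%:Z <= m2 by move=> H; lia.
    apply: (@le_bigmin_c _ _ T 0%VS); first exact: sub0v.
    move=> Z ZW.
    have [X [XV HX]] := stepa h1 h2 hb1 hb2 ZW.
    have H : m1 <= D X by rewrite /m1; apply: bigmin_le_cond.
    rewrite -/D -/T -/W -/c in HX.
    move: H HX; set u := D X; set v := T Z; set w := \dim W.
    clearbody m1 m2 u v w c; intros; lia.
  apply: (@le_bigmin_c _ _ D 0%VS); first exact: sub0v.
  move=> X XV.
  have [Z [ZW HZ]] := stepb h1 h2 hb1 hb2 XV.
  have H : m2 <= T Z by rewrite /m2; apply: bigmin_le_cond.
  rewrite -/D -/T -/W -/c in HZ.
  move: H HZ; set u := D X; set v := T Z; set w := \dim W.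
  clearbody m1 m2 u v w c; intros; lia.
have dW := dim_orth hb V; rewrite -/W in dW.
have l5 := dim_le_n V.
rewrite dimf hm hE.
move: dW l5; set x := \dim W; set y := \dim V.
intros; lia.
Qed.
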